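(* For any positive integers $k$ and $M$ such that $k$ is a power of $2$, there exist a set $X$, $k$ families $F_1,\dots,F_k$ of functions with domain $X$ and codomain $\{0,1\}$, and a function $g:\{0,1\}^k\to\{0,1\}$ such that $\mathrm{opt}_{\mathrm{std}}(F_i)\le M$ for all $i\in\{1,\dots,k\}$ and \[\mathrm{opt}_{\mathrm{std}}(\mathrm{COMPOSE}(F_1,\dots,F_k,g))\ge\tfrac12 kM\log_2(k).\]
   Context: For a family $F$ of functions from a set $X$ to a set $Y$, $\mathrm{opt}_{\mathrm{std}}(F)$ is the worst-case number of mistakes in the standard online learning model under optimal play: an adversary secretly fixes $f\in F$ and presents inputs $x_1,x_2,\dots\in X$ adaptively; after each input the learner guesses $f(x_t)$ and the adversary then reveals $f(x_t)$; a mistake is an incorrect guess; the learner minimizes and the adversary maximizes the number of mistakes. $\mathrm{COMPOSE}(F_1,\dots,F_k,g)$ is the family of all functions $x\mapsto g(f_1(x),\dots,f_k(x))$ on $X$ with $f_i\in F_i$ for each $i$. *)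

(* Defs.v *)
From mathcomp Require Import all_boot.
Set Implicit Arguments. Unset Strict Implicit. Unset Printing Implicit Defensive.

Definition fnfamily (X Y : Type) := (X -> Y) -> Prop.

Definition restrict (X Y : Type) (S : fnfamily X Y) (x : X) (y : Y) : fnfamily X Y :=
  fun f => S f /\ f x = y.

(* [forces S m] : in the standard online learning model, starting with the
   set S of target functions still consistent with the revealed labels, the
   adversary has a strategy that forces at least m (further) mistakes against
   every (deterministic, adaptive) learner.  At each round the adversary
   presents x, the learner guesses y, the adversary reveals a label y'
   consistent with some remaining function (so some f in the original fnfamily
   is consistent with all revealed labels, i.e. could have been fixed
   secretly); a mistake is y' <> y.  The inductive definition allows
   arbitrarily many (finitely many along every play) rounds. *)
Inductive forces (X Y : Type) : fnfamily X Y -> nat -> Prop :=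
| forces_base (S : fnfamily X Y) : (exists f, S f) -> forces S 0
| forces_step (S : fnfamily X Y) (m : nat) (x : X) :
    (forall y : Y, exists (y' : Y) (n : nat),
        forces (restrict S x y') n /\
        ((y' = y /\ m <= n) \/ (y' <> y /\ m <= n.+1))) ->
    forces S m.

Definition opt_std_le (X Y : Type) (F : fnfamily X Y) (M : nat) : Prop :=
  ~ forces F M.+1.

Definition opt_std_ge (X Y : Type) (F : fnfamily X Y) (n : nat) : Prop :=
  forces F n.

Definition COMPOSE (X : Type) (k : nat) (F : 'I_k -> fnfamily X bool)
  (g : ('I_k -> bool) -> bool) : fnfamily X bool :=
  fun h => exists fs : 'I_k -> X -> bool,
      (forall i, F i (fs i)) /\ (forall x, h x = g (fun i => fs i x)).

(* Main.v *)
Require Import Defs.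
From mathcomp Require Import all_boot zify.
Set Implicit Arguments. Unset Strict Implicit.

Lemma forces_ind2 (X Y : Type) (P : fnfamily X Y -> nat -> Prop)
 (Hb : forall S, (exists f, S f) -> P S 0)
 (Hs : forall S m x, (forall y, exists y' n, forces (restrict S x y') n /\ P (restrict S x y') n /\
        ((y' = y /\ m <= n) \/ (y' <> y /\ m <= n.+1))) -> P S m) :
  forall S m, forces S m -> P S m.
Proof.
fix IH 3. intros S m H. destruct H as [S Hne | S m x H].
- exact (Hb S Hne).
- apply (Hs S m x). intro y. destruct (H y) as [y' [n [Hf Hd]]].
  exists y', n. split; [exact Hf|split; [exact (IH _ _ Hf)|exact Hd]].
Qed.

Lemma forces_ne (X : Type) (S : fnfamily X bool) m : forces S m -> exists f, S f.
Proof.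
move=> H; elim/forces_ind2: H => {S m} [S //|S m x H].
have [y' [n [_ [[f [Sf _]] _]]]] := H true.
by exists f.
Qed.

Lemma forces_mono (X : Type) (S S' : fnfamily X bool) m :
  forces S m -> (forall f, S f -> S' f) -> forces S' m.
Proof.
move=> H; elim/forces_ind2: H S' => {S m} [S [f Sf] S' sub|S m x H S' sub].
  by apply: forces_base; exists f; apply: sub.
apply: (forces_step (x := x)) => y.
have [y' [n [_ [IH Hd]]]] := H y.
exists y', n; split=> //; apply: IH => f [Sf fx]; split=> //; exact: sub.
Qed.

Lemma forces_le (X : Type) (S : fnfamily X bool) m m' :
  forces S m -> m' <= m -> forces S m'.
Proof.
case=> {S m} [S ne|S m x H] le.
  by move: le; rewrite leqn0 => /eqP ->; apply: forces_base.
apply: (forces_step (x := x)) => y.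
have [y' [n [Hf Hd]]] := H y.
exists y', n; split=> //; case: Hd => [[e l]|[e l]]; [left|right]; split=> //; lia.
Qed.

Lemma forces_shatter (X : Type) (S : fnfamily X bool) x m :
  (forall y, forces (restrict S x y) m) -> forces S m.+1.
Proof.
move=> H; apply: (forces_step (x := x)) => y.
exists (~~ y), m; split; first exact: H.
by right; split=> //; case: y.
Qed.

Definition bit (i l : nat) : bool := odd (i %/ 2 ^ l).

Lemma ub (i : nat) (S : fnfamily (nat * nat) bool) m : forces S m ->
  forall c (K : nat -> bool), (forall f, S f -> exists A : seq nat, size A <= c /\
     forall p l, f (p, l) = (K p || (p \in A)) && bit i l) -> m <= c.
Proof.
move=> H; elim/forces_ind2: H => {S m} [//|S m [p l] H] c K HS.
have [y' [n [Hf [IH Hd]]]] := H (K p && bit i l).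
case: Hd => [[_ le]|[ne le]].
  apply: leq_trans le _; apply: (IH c K) => f [Sf _]; exact: HS.
have [f [Sf fx]] := forces_ne Hf.
have [A [sA fA]] := HS f Sf.
have [Kp [bl [pA' y'T]]] : K p = false /\ bit i l = true /\ p \in A /\ y' = true.
  by move: fx ne; rewrite fA; case: (K p); case: (bit i l); case: (p \in A); move: y' Hf IH => [] Hf IH.
move: fx Hf IH ne; rewrite y'T => fx Hf IH ne.
have c0 : 0 < c by apply: leq_trans sA; case: (A) pA'.
suff : n <= c.-1 by lia.
apply: (IH c.-1 (fun q => K q || (q == p))) => f' [Sf' f'x].
have [A' [sA' fA']] := HS f' Sf'.
have pA'' : p \in A' by move: f'x; rewrite fA' Kp bl; case: (p \in A').
exists [seq q <- A' | q != p]; split.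
  have : size [seq q <- A' | q != p] < size A'.
    rewrite size_filter -[X in _ < X]count_predT.
    have := count_predUI (fun q => q != p) (fun q => q == p) A'.
    have -> : count (predU (fun q => q != p) (fun q => q == p)) A' = count predT A'.
      by apply: eq_count => q /=; case: (q == p).
    have -> : count (predI (fun q => q != p) (fun q => q == p)) A' = 0.
      by apply/eqP; rewrite eqn0Ngt -has_count; apply/hasPn => q _ /=; case: (q == p).
    have : 0 < count (fun q => q == p) A' by rewrite -has_count; apply/hasP; exists p.
    lia.
  by move=> h; rewrite -ltnS (ltn_predK c0); apply: leq_trans h sA'.
move=> q l'; rewrite fA' mem_filter.
case: (eqVneq q p) => [->|qp] /=; first by rewrite pA'' !orbT.
by rewrite orbF.
Qed.
Lemma sub_step i d b : i %/ 2 ^ d.+1 = b <-> (i %/ 2 ^ d = b.*2 \/ i %/ 2 ^ d = b.*2.+1).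
Proof.
rewrite expnSr divnMA; move: (i %/ 2 ^ d) => q; split; lia.
Qed.

Fixpoint S (d b : nat) (c : nat -> nat) : nat :=
  match d with 0 => c b | d'.+1 => S d' b.*2 c + S d' b.*2.+1 c end.
Fixpoint Phi (d b : nat) (c : nat -> nat) : nat :=
  match d with 0 => 0 | d'.+1 => minn (S d' b.*2 c) (S d' b.*2.+1 c) + Phi d' b.*2 c + Phi d' b.*2.+1 c end.
Fixpoint br (d b : nat) (c : nat -> nat) (i : nat) : nat :=
  match d with 0 => 0 | d'.+1 => ((0 < S d' b.*2 c) && (0 < S d' b.*2.+1 c)) + br d' (i %/ 2 ^ d') c i end.
Definition dec (c : nat -> nat) (i : nat) := fun x => if x == i then (c x).-1 else c x.

Lemma agree d : forall b c c', (forall i, i %/ 2 ^ d = b -> c i = c' i) ->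
  S d b c = S d b c' /\ Phi d b c = Phi d b c'.
Proof.
elim: d => [|d IH] b c c' h /=.
  by rewrite (h b) // expn0 divn1.
have [h1 h2] := IH b.*2 c c' (fun i e => h i (proj2 (sub_step i d b) (or_introl e))).
have [h3 h4] := IH b.*2.+1 c c' (fun i e => h i (proj2 (sub_step i d b) (or_intror e))).
by rewrite h1 h2 h3 h4.
Qed.

Lemma S_le d : forall b c i, i %/ 2 ^ d = b -> c i <= S d b c.
Proof.
elim: d => [|d IH] b c i /=; first by rewrite expn0 divn1 => ->.
case/sub_step => e; [have := IH _ c i e | have := IH _ c i e]; lia.
Qed.

Lemma S_pos d : forall b c, 0 < S d b c -> exists i, i %/ 2 ^ d = b /\ 0 < c i.
Proof.
elim: d => [|d IH] b c /=; first by move=> h; exists b; rewrite expn0 divn1.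
case: (posnP (S d b.*2 c)) => [z|p _].
  rewrite z add0n => /IH [i [e ci]]; exists i; split=> //; apply/sub_step; by right.
have [i [e ci]] := IH _ _ p; exists i; split=> //; apply/sub_step; by left.
Qed.

Lemma S0_Phi d : forall b c, S d b c = 0 -> Phi d b c = 0.
Proof.
elim: d => [|d IH] b c //=.
move=> h; have h1 : S d b.*2 c = 0 by lia.
have h2 : S d b.*2.+1 c = 0 by lia.
by rewrite h1 h2 (IH _ _ h1) (IH _ _ h2).
Qed.

Lemma out_dec d b c i : i %/ 2 ^ d <> b ->
  S d b (dec c i) = S d b c /\ Phi d b (dec c i) = Phi d b c.
Proof.
move=> ne; apply: agree => x e; rewrite /dec.
case: eqP => // exi; subst x; by case: ne.
Qed.

Lemma S_dec d : forall b c i, i %/ 2 ^ d = b -> 0 < c i -> S d b c = (S d b (dec c i)).+1.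
Proof.
elim: d => [|d IH] b c i /=.
  rewrite expn0 divn1 => -> ci; rewrite /dec eqxx; lia.
move=> /sub_step [] e ci.
  rewrite (IH _ _ _ e ci) (proj1 (@out_dec d b.*2.+1 c i _)) //; lia.
rewrite (IH _ _ _ e ci) (proj1 (@out_dec d b.*2 c i _)) //; lia.
Qed.

Lemma Phi_dec d : forall b c i, i %/ 2 ^ d = b -> 0 < c i ->
  Phi d b c <= br d b c i + Phi d b (dec c i).
Proof.
elim: d => [|d IH] b c i //=.
move=> /sub_step [] e ci.
  have := IH _ _ _ e ci; have := S_dec e ci.
  have [o1 o2] := @out_dec d b.*2.+1 c i ltac:(lia).
  rewrite e o1 o2.
  case: (posnP (S d b.*2.+1 c)) => [->|p]; first by rewrite /= andbF; lia.
  move=> h1; rewrite h1 andbT /=; lia.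
have := IH _ _ _ e ci; have := S_dec e ci.
have [o1 o2] := @out_dec d b.*2 c i ltac:(lia).
rewrite e o1 o2.
case: (posnP (S d b.*2 c)) => [->|p]; first by rewrite /=; lia.
move=> h1; rewrite h1 /=; lia.
Qed.

Lemma S_const M d : forall b, S d b (fun _ => M) = 2 ^ d * M.
Proof. elim: d => [|d IH] b /=; first by rewrite mul1n. rewrite !IH expnS; lia. Qed.

Lemma Phi_const M d : forall b, (Phi d b (fun _ => M)) * 2 = 2 ^ d * M * d.
Proof.
elim: d => [|d IH] b /=; first by rewrite muln0.
rewrite !S_const minnn mulnDl mulnDl !IH expnS.
nia.
Qed.

Definition hs (s : seq nat) : nat * nat -> bool := fun x => (x.1 < size s) && bit (nth 0 s x.1) x.2.
Definition Good (k M : nat) (s : seq nat) := (forall a, a \in s -> a < k) /\ (forall i, count_mem i s <= M).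
Definition T k M s : fnfamily (nat * nat) bool := fun h => exists t, Good k M (s ++ t) /\ h = hs (s ++ t).
Definition D k M s (P : nat -> bool) : fnfamily (nat * nat) bool :=
  fun h => exists i t, P i /\ Good k M (s ++ i :: t) /\ h = hs (s ++ i :: t).
Definition cs (k M : nat) (s : seq nat) := fun i => if i < k then M - count_mem i s else 0.

Lemma hs_val s i t l : hs (s ++ i :: t) (size s, l) = bit i l.
Proof. by rewrite /hs /= size_cat /= nth_cat ltnn subnn /= addnS ltnS leq_addr. Qed.

Lemma descent k M c d : forall b s m,
 (forall i, i %/ 2 ^ d = b -> 0 < c i -> exists n, forces (T k M (rcons s i)) n /\ m <= n + br d b c i) ->
 (exists i, i %/ 2 ^ d = b /\ 0 < c i) ->
 forces (D k M s (fun i => i %/ 2 ^ d == b)) m.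
Proof.
elim: d => [|d IH] b s m H [i0 [e0 c0]].
  move: e0; rewrite expn0 divn1 => e0; subst i0.
  have [n [Hf le]] := H b ltac:(by rewrite expn0 divn1) c0.
  apply: (@forces_le _ _ n m); last by move: le => /=; lia.
  apply: (forces_mono Hf) => h [t [G ->]]; exists b, t; rewrite divn1 eqxx.
  by rewrite -cats1 -catA /= in G *.
case: (boolP ((0 < S d b.*2 c) && (0 < S d b.*2.+1 c))) => [/andP [pL pR]|np].
  apply: (@forces_le _ _ m.-1.+1); last by lia.
  apply: (@forces_shatter _ _ (size s, d)) => y.
  have sub : forall i, i %/ 2 ^ d = b.*2 + y -> i %/ 2 ^ d.+1 = b.
    move=> i e; apply/sub_step; case: y e => /= e; [right|left]; lia.
  have Hf : forces (D k M s (fun i => i %/ 2 ^ d == b.*2 + y)) m.-1.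
    apply: IH.
    - move=> i e ci; have [n [Hf le]] := H i (sub i e) ci.
      exists n; split=> //; move: le => /=; rewrite e; lia.
    - by move: sub; case: y => /= _; [rewrite addn1|rewrite addn0]; apply: S_pos.
  apply: (forces_mono Hf) => h [i [t [/eqP e [G ->]]]]; split.
    by exists i, t; rewrite (sub i e) eqxx.
  by rewrite hs_val /bit e; move: sub Hf; case: y {e} => _ _; rewrite /= ?odd_double ?addn1 ?addn0 /= ?odd_double.
have sub : forall i, i %/ 2 ^ d = i0 %/ 2 ^ d -> i %/ 2 ^ d.+1 = b.
  move=> i e; move: e0; rewrite !expnSr !divnMA => <-; by rewrite e.
have Hf : forces (D k M s (fun i => i %/ 2 ^ d == i0 %/ 2 ^ d)) m.
  apply: IH.
  - move=> i e ci; have [n [Hf le]] := H i (sub i e) ci.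
    exists n; split=> //; move: le => /=; rewrite e (negbTE np); lia.
  - by exists i0.
apply: (forces_mono Hf) => h [i [t [/eqP e [G ->]]]].
by exists i, t; rewrite (sub i e) eqxx.
Qed.

Lemma cs_rcons k M s i x : cs k M (rcons s i) x = dec (cs k M s) i x.
Proof.
rewrite /cs /dec -cats1 count_cat /=.
case: (eqVneq x i) => [->|ne] /=; first by case: (i < k) => //; lia.
by rewrite !addn0.
Qed.

Lemma main k M j (hk : k = 2 ^ j) : forall s, Good k M s -> forces (T k M s) (Phi j 0 (cs k M s)).
Proof.
move=> s; have [N] := ubnP (S j 0 (cs k M s)); elim: N s => [//|N IH] s ltN G.
case: (posnP (S j 0 (cs k M s))) => [z|p].
  rewrite (S0_Phi z); apply: forces_base; exists (hs s), [::]; by rewrite cats0.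
have Hd : forces (D k M s (fun i => i %/ 2 ^ j == 0)) (Phi j 0 (cs k M s)).
  apply: descent; last exact: (S_pos p).
  move=> i e ci.
  have ag : forall x, x %/ 2 ^ j = 0 -> cs k M (rcons s i) x = dec (cs k M s) i x.
    by move=> x _; rewrite cs_rcons.
  have [aS aP] := agree ag.
  have Gi : Good k M (rcons s i).
    move: ci; rewrite /cs; case: ifP => // ik cnt; case: G => G1 G2; split.
      by move=> a; rewrite -cats1 mem_cat inE => /orP [/G1|/eqP ->].
    move=> x; rewrite -cats1 count_cat /=; case: (eqVneq i x) => [<-|ne] /=.
      by rewrite addn0 addn1 -subn_gt0.
    by rewrite addn0 addn0 G2.
  exists (Phi j 0 (cs k M (rcons s i))); split.
    apply: IH Gi; have := S_dec e ci; rewrite aS; lia.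
  rewrite aP addnC; exact: Phi_dec.
apply: (forces_mono Hd) => h [i [t [_ [G' ->]]]]; by exists (i :: t).
Qed.

Unset Implicit Arguments.
Set Strict Implicit.

Theorem mainTheorem14 (k M j : nat) (hk : k = 2 ^ j) (hM : 0 < M) :
  exists (X : Type) (F : 'I_k -> fnfamily X bool) (g : ('I_k -> bool) -> bool),
    (forall i : 'I_k, opt_std_le (F i) M) /\
    (forall n : nat, 2 * n <= k * M * j -> opt_std_ge (COMPOSE F g) n).
Proof.
pose F := fun (i : 'I_k) (f : nat * nat -> bool) =>
  exists A : seq nat, size A <= M /\ forall p l, f (p, l) = (p \in A) && bit i l.
exists (nat * nat)%type, F, (fun b => [exists i, b i]); split.
  move=> i H; have := ub H (c := M) (K := fun _ => false).
  have : M.+1 <= M -> False by rewrite ltnn.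
  move=> h1 h2; apply: h1; apply: h2 => f [A [sA fA]]; exists A; split=> //.
move=> n le.
have G0 : Good k M [::] by split.
have Hm := @main k M j hk [::] G0.
have ag : forall x, x %/ 2 ^ j = 0 -> cs k M [::] x = (fun _ => M) x.
  move=> x e; rewrite /cs /= subn0 hk.
  have -> : x < 2 ^ j by rewrite ltnNge -divn_gt0 ?expn_gt0 // e.
  done.
have [_ aP] := agree ag.
have HPhi : Phi j 0 (cs k M [::]) * 2 = k * M * j by rewrite aP Phi_const hk.
have Hn : forces (T k M [::]) n.
  apply: (forces_le Hm); lia.
apply: (forces_mono Hn) => h [t [[G1 G2] ->]] /=.
pose A := fun i : nat => [seq p <- iota 0 (size t) | nth 0 t p == i].
exists (fun i x => (x.1 \in A i) && bit i x.2); split.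
  move=> i; exists (A i); split=> //.
  rewrite size_filter.
  have -> : count (fun p => nth 0 t p == i) (iota 0 (size t)) = count_mem (i : nat) t.
    by rewrite -[in RHS](mkseq_nth 0 t) /mkseq count_map.
  exact: G2.
case=> p l; rewrite /hs /=.
case: (ltnP p (size t)) => hp.
  have ak : nth 0 t p < k by apply: G1; apply: mem_nth.
  apply/idP/existsP.
    move=> b; exists (Ordinal ak); by rewrite /A mem_filter mem_iota /= eqxx hp b.
  by case=> i; rewrite /A mem_filter mem_iota /= => /andP [/andP [/eqP -> _] b].
apply/esym/existsP => [[i]]; rewrite /A mem_filter mem_iota /=.
by rewrite ltnNge hp !andbF.
Qed.
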